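(* Let $g_c:[0,\infty)\to[0,\infty)$ be a measurable function with $0<K:=\int_0^\infty g_c(u)\,\mathrm{d}u<\infty$, let $\mu_1,\mu_2\in\mathbb{R}$, $\sigma>0$, $0<\rho<1$, $\boldsymbol{\mu}=(\mu_1,\mu_2)^\top$ and $\boldsymbol{\Sigma}=\begin{pmatrix}\sigma^2&\rho\sigma\\ \rho\sigma&1\end{pmatrix}$. Suppose $(Y^*,U^* )^\top$ has PDF $$f(\boldsymbol{y})=\frac{1}{|\boldsymbol{\Sigma}|^{1/2}\,\pi K}\,g_c\big((\boldsymbol{y}-\boldsymbol{\mu})^\top\boldsymbol{\Sigma}^{-1}(\boldsymbol{y}-\boldsymbol{\mu})\big),\qquad \boldsymbol{y}\in\mathbb{R}^2,$$ and $\mathbb{P}(U^*>0)>0$. Then the PDF of $Y^*$ conditional on $U^*>0$ is $$f_{Y^*\mid U^*>0}(y)=\frac{\rho\sqrt{1-\rho^2}}{\sigma}\,\frac{\int_{-\infty}^{z(y)} g_c\Big(\big(\frac{y-\mu_1}{\sigma}\big)^2+w^2\Big)\,\mathrm{d}w}{\int_{-\mu_2}^{\infty}\Big\{\int_{-\infty}^{\infty} g_c\Big(\big(\frac{x}{\rho}\big)^2+\big(\frac{u-x}{\sqrt{1-\rho^2}}\big)^2\Big)\,\mathrm{d}x\Big\}\,\mathrm{d}u},\qquad y\in\mathbb{R},$$ where $z(y)=\frac{\mu_2}{\sqrt{1-\rho^2}}+\frac{\rho}{\sqrt{1-\rho^2}}\,\frac{y-\mu_1}{\sigma}$.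
   Context: The distribution of $(Y^*,U^* )^\top$ is the bivariate symmetric distribution with location $\boldsymbol{\mu}$, scale matrix $\boldsymbol{\Sigma}$ and density generator $g_c$; $|\boldsymbol{\Sigma}|=\sigma^2(1-\rho^2)$. *)

(* Defs.v *)
From HB Require Import structures.
From mathcomp Require Import all_boot all_order all_algebra.
From mathcomp Require Import all_classical all_reals all_analysis.
Set Implicit Arguments. Unset Strict Implicit. Unset Printing Implicit Defensive.
Import Order.TTheory GRing.Theory Num.Theory.
Local Open Scope ring_scope.

Definition Sigma (R : realType) (sigma rho : R) : 'M[R]_2 :=
  \matrix_(i < 2, j < 2)
    (if (i == 0) && (j == 0) then sigma ^+ 2
     else if (i == 1) && (j == 1) then 1
     else rho * sigma).

Definition vec2 (R : realType) (p : R * R) : 'rV[R]_2 :=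
  \row_(i < 2) (if i == 0 then p.1 else p.2).

Definition qform (R : realType) (S : 'M[R]_2) (mu y : R * R) : R :=
  let v := vec2 (y.1 - mu.1, y.2 - mu.2) in
  (v *m invmx S *m v^T) 0 0.

Definition biv_sym_pdf (R : realType) (g : R -> R) (K : R)
  (mu : R * R) (sigma rho : R) (y : R * R) : R :=
  (Num.sqrt (\det (Sigma sigma rho)) * pi * K)^-1
    * g (qform (Sigma sigma rho) mu y).

Definition zfun (R : realType) (mu1 mu2 sigma rho y : R) : R :=
  mu2 / Num.sqrt (1 - rho ^+ 2)
  + rho / Num.sqrt (1 - rho ^+ 2) * ((y - mu1) / sigma).

Local Open Scope ereal_scope.

Definition cond_pdf (R : realType) (g : R -> R)
  (mu1 mu2 sigma rho : R) (y : R) : \bar R :=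
  ((rho * Num.sqrt (1 - rho ^+ 2) / sigma)%R)%:E
  * (\int[@lebesgue_measure R]_(w in `]-oo, zfun mu1 mu2 sigma rho y]%classic)
        (g (((y - mu1) / sigma) ^+ 2 + w ^+ 2)%R)%:E)
  / (\int[@lebesgue_measure R]_(u in `](- mu2)%R, +oo[%classic)
        (\int[@lebesgue_measure R]_(x in [set: R])
           (g ((x / rho) ^+ 2 + ((u - x) / Num.sqrt (1 - rho ^+ 2)) ^+ 2)%R)%:E)).

(* Main.v *)
Require Import Defs.
From HB Require Import structures.
From mathcomp Require Import all_boot all_order all_algebra.
From mathcomp Require Import all_classical all_reals all_analysis.
From mathcomp Require Import ring lra measurable_realfun.
Import Order.TTheory GRing.Theory Num.Theory.
Set Implicit Arguments. Unset Strict Implicit. Unset Printing Implicit Defensive.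
Local Open Scope classical_set_scope.
Local Open Scope ring_scope.
Lemma det_Sigma (R : realType) (sigma rho : R) :
  \det (Sigma sigma rho) = sigma ^+ 2 * (1 - rho ^+ 2).
Proof.
rewrite (expand_det_row _ 0) !big_ord_recr !big_ord0 /= /cofactor !det_mx11 !mxE /=.
rewrite /bump /= ?mxE /=. rewrite addn0 add0n expr0 expr1; ring.
Qed.

Definition Minv (R : realType) (sigma rho : R) : 'M[R]_2 :=
  (sigma ^+ 2 * (1 - rho ^+ 2))^-1 *: \matrix_(i < 2, j < 2)
    (if (i == 0) && (j == 0) then 1
     else if (i == 1) && (j == 1) then sigma ^+ 2
     else - (rho * sigma)).

Lemma invmx_Sigma (R : realType) (sigma rho : R) : sigma != 0 -> rho ^+ 2 != 1 ->
  invmx (Sigma sigma rho) = Minv sigma rho.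
Proof.
move=> s0 r1.
have hd : sigma ^+ 2 * (1 - rho ^+ 2) != 0.
  by rewrite mulf_neq0 ?expf_neq0 // subr_eq0 eq_sym.
have r1' : 1 - rho ^+ 2 != 0 by rewrite subr_eq0 eq_sym.
have U : Sigma sigma rho \in unitmx by rewrite unitmxE det_Sigma unitfE.
have H : Sigma sigma rho *m Minv sigma rho = 1%:M.
{ apply/matrixP => i j; rewrite !mxE !big_ord_recr big_ord0 /= !mxE /=.
  case: i => [[|[|i]] Hi] //=; case: j => [[|[|j]] Hj] //=; rewrite ?mxE /=. all: field; rewrite ?s0 ?r1' //. }
rewrite -[LHS]mulmx1 -H mulmxA mulVmx // mul1mx //.
Qed.

Lemma qform_Sigma (R : realType) (sigma rho mu1 mu2 y u : R) : sigma != 0 -> rho ^+ 2 != 1 ->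
  qform (Sigma sigma rho) (mu1, mu2) (y, u) =
  ((y - mu1) / sigma) ^+ 2 + ((u - mu2) - rho * ((y - mu1) / sigma)) ^+ 2 / (1 - rho ^+ 2).
Proof.
move=> s0 r1; rewrite /qform invmx_Sigma //.
have r1' : 1 - rho ^+ 2 != 0 by rewrite subr_eq0 eq_sym.
rewrite !mxE !big_ord_recr !big_ord0 /= !mxE !big_ord_recr !big_ord0 /= !mxE /=.
field. by rewrite s0 r1'.
Qed.

Section Affine.
Local Open Scope ereal_scope.
Lemma measurable_affine (R : realType) (a b : R) :
  measurable_fun [set: R] (fun x : R => (a * x + b)%R).
Proof. by apply: measurable_realfun.measurable_funD => //; apply: measurable_funM. Qed.

Lemma lebesgue_affine (R : realType) (a b : R) : a != 0%R -> forall E : set R, measurable E ->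
  lebesgue_measure E = (`|a|)%:E * lebesgue_measure ((fun x => a * x + b)%R @^-1` E).
Proof.
move=> a0 E mE.
have ma : measurable_fun [set: measurableTypeR R] (fun x : measurableTypeR R => (a * x + b)%R : measurableTypeR R).
  exact: (@measurable_affine R a b).
pose nu := mscale (NngNum (normr_ge0 a)) (measure_function_pushforward__canonical__measure_function_Measure (@lebesgue_measure R) ma).
have -> : (`|a|)%:E * lebesgue_measure ((fun x => a * x + b)%R @^-1` E) = nu E by [].
apply:   (@lebesgue_measure_unique R (mscale (NngNum (normr_ge0 a)) (measure_function_pushforward__canonical__measure_function_Measure (@lebesgue_measure R) ma))) => // X /ocitvP [->|[[c d] /= cd ->]].
  by rewrite !measure0.
rewrite /mscale /= /pushforward.
have [ap|an] := ltP 0%R a.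
  have -> : (fun x : measurableTypeR R => (a * x + b)%R) @^-1` `]c, d] = `]((c - b) / a)%R, ((d - b) / a)%R]%classic.
    apply/seteqP; split => x /=; rewrite !in_itv /= ltr_pdivrMr // ler_pdivlMr //;
      move=> /andP [h1 h2]; apply/andP; split; lra.
  rewrite !lebesgue_measure_itv /= !lte_fin cd ltr_pM2r ?invr_gt0 // ltrD2r cd.
  rewrite -EFinM -EFinB; congr (_%:E); rewrite gtr0_norm //; field; lra.
have an' : (a < 0)%R by rewrite lt_neqAle a0 an.
have -> : (fun x : measurableTypeR R => (a * x + b)%R) @^-1` `]c, d] = `[((d - b) / a)%R, ((c - b) / a)%R[%classic.
  apply/seteqP; split => x /=; rewrite !in_itv /= ltr_ndivlMr // ler_ndivrMr //;
    move=> /andP [h1 h2]; apply/andP; split; lra.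
rewrite !lebesgue_measure_itv /= !lte_fin cd ltr_nM2r ?invr_lt0 // ltrD2r cd.
rewrite -EFinM -EFinB; congr (_%:E); rewrite ltr0_norm //; field; lra.
Qed.

Lemma integral_affine (R : realType) (a b : R) (h : R -> \bar R) (E : set R) :
  a != 0%R -> measurable E -> measurable_fun setT h -> (forall x, 0 <= h x) ->
  \int[lebesgue_measure]_(x in E) h x =
  (`|a|)%:E * \int[lebesgue_measure]_(w in (fun w => a * w + b)%R @^-1` E) h (a * w + b)%R.
Proof.
move=> a0 mE mh h0.
have ma : measurable_fun [set: measurableTypeR R] (fun x : measurableTypeR R => (a * x + b)%R : measurableTypeR R).
  exact: (@measurable_affine R a b).
pose nu := mscale (NngNum (normr_ge0 a)) (measure_function_pushforward__canonical__measure_function_Measure (@lebesgue_measure R) ma).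
rewrite (eq_measure_integral (mscale (NngNum (normr_ge0 a)) (measure_function_pushforward__canonical__measure_function_Measure (@lebesgue_measure R) ma))); last first.
  by move=> A mA _; exact: (@lebesgue_affine R a b a0 A mA).
rewrite ge0_integral_mscale //; last exact: measurable_funS mh.
congr (_ * _).
rewrite (ge0_integral_pushforward ma) //; last exact: measurable_funS mh.
Qed.

End Affine.

Section Prod.
Local Open Scope ereal_scope.
Variable R : realType.
Local Notation mu := (@lebesgue_measure R).

Lemma integral_setX1 (G : R * R -> \bar R) (A B : set R) :
  measurable A -> measurable B ->
  measurable_fun setT G -> (forall p, 0 <= G p) ->
  \int[mu \x mu]_(p in A `*` B) G p = \int[mu]_(x in A) \int[mu]_(y in B) G (x, y).
Proof.
move=> mA mB mG G0.
rewrite integral_mkcond fubini_tonelli1 //; last first.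
- by move=> p; rewrite patchE; case: ifP.
- by apply/(measurable_restrictT _ _).1 => //; [exact: measurableX | exact: measurable_funS mG].
rewrite [RHS]integral_mkcond; apply: eq_integral => x _.
rewrite /fubini_F patchE; case: ifPn => xA.
  rewrite [RHS]integral_mkcond; apply: eq_integral => y _.
  by rewrite !patchE in_setX /= xA.
rewrite -[RHS](integral0 mu setT); apply: eq_integral => y _.
by rewrite patchE in_setX /= (negbTE xA).
Qed.

Lemma integral_setX2 (G : R * R -> \bar R) (A B : set R) :
  measurable A -> measurable B ->
  measurable_fun setT G -> (forall p, 0 <= G p) ->
  \int[mu \x mu]_(p in A `*` B) G p = \int[mu]_(y in B) \int[mu]_(x in A) G (x, y).
Proof.
move=> mA mB mG G0.
rewrite integral_mkcond fubini_tonelli2 //; last first.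
- by move=> p; rewrite patchE; case: ifP.
- by apply/(measurable_restrictT _ _).1 => //; [exact: measurableX | exact: measurable_funS mG].
rewrite [RHS]integral_mkcond; apply: eq_integral => y _.
rewrite /fubini_G patchE; case: ifPn => yB.
  rewrite [RHS]integral_mkcond; apply: eq_integral => x _.
  by rewrite !patchE in_setX /= yB andbT.
rewrite -[RHS](integral0 mu setT); apply: eq_integral => x _.
by rewrite patchE in_setX /= (negbTE yB) andbF.
Qed.
End Prod.

Ltac mtac := repeat (apply: measurable_funD || apply: measurable_funM || apply: measurable_funB
  || apply: measurable_funX || apply: measurable_funN || apply: measurable_cst || apply: measurable_id
  || apply: measurable_fst || apply: measurable_snd).

Section Main.
Local Open Scope ereal_scope.
Variables (R : realType) (g : R -> R) (mu1 mu2 sigma rho : R).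
Hypotheses (mg : measurable_fun `[(0:R)%R, +oo[ g)
  (g0 : forall u, (0 <= u)%R -> (0 <= g u)%R)
  (sig0 : (0 < sigma)%R) (rho0 : (0 < rho)%R) (rho1 : (rho < 1)%R).

Definition Qf (y u : R) : R := (((y - mu1) / sigma) ^+ 2 +
  ((u - mu2) - rho * ((y - mu1) / sigma)) ^+ 2 / (1 - rho ^+ 2))%R.

Lemma r2_gt0 : (0 < 1 - rho ^+ 2)%R.
Proof. by rewrite subr_gt0 expr2 mulr_ilt1 // ltW. Qed.

Lemma Qf_ge0 y u : (0 <= Qf y u)%R.
Proof.
rewrite /Qf; apply: addr_ge0; first exact: sqr_ge0.
by apply: divr_ge0; [exact: sqr_ge0 | exact: ltW r2_gt0].
Qed.

Lemma mg_comp d (T : measurableType d) (D : set T) (h : T -> R) :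
  measurable D -> measurable_fun D h -> (forall x, D x -> (0 <= h x)%R) ->
  measurable_fun D (fun x => (g (h x))%:E).
Proof.
move=> mD mh h0; apply/measurable_EFinP.
apply: (measurable_comp (F := `[(0:R)%R, +oo[%classic)) => //.
by move=> _ [x Dx <-]; rewrite /= in_itv /= andbT; exact: h0.
Qed.

Lemma mQ : measurable_fun setT (fun p : R * R => Qf p.1 p.2).
Proof.
rewrite /Qf.
repeat (apply: measurable_funD || apply: measurable_funM || apply: measurable_funB
  || apply: measurable_funX || apply: measurable_fst || apply: measurable_snd || apply: measurable_funN || apply: measurable_cst).
Qed.

Local Notation s := (Num.sqrt (1 - rho ^+ 2)).
Local Notation mu := (@lebesgue_measure R).

Lemma s_gt0 : (0 < s)%R.
Proof. by rewrite sqrtr_gt0 r2_gt0. Qed.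

Lemma s_sqr : (s ^+ 2 = 1 - rho ^+ 2)%R.
Proof. by rewrite sqr_sqrtr // ltW // r2_gt0. Qed.

Lemma mpoly1 (k : R) : measurable_fun setT (fun w : R => (k + w ^+ 2)%R).
Proof.
repeat (apply: measurable_funD || apply: measurable_funM || apply: measurable_funB
  || apply: measurable_funX || apply: measurable_funN || apply: measurable_cst || apply: measurable_id).
Qed.

Lemma inner_num y :
  \int[mu]_(u in `]0%R, +oo[) (g (Qf y u))%:E =
  s%:E * \int[mu]_(w in `]-oo, zfun mu1 mu2 sigma rho y]) (g (((y - mu1) / sigma) ^+ 2 + w ^+ 2))%:E.
Proof.
have s0 := s_gt0.
have sn0 : (- s != 0)%R by rewrite oppr_eq0 gt_eqF.
have mh : measurable_fun setT (fun u => (g (Qf y u))%:E).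
  apply: mg_comp => //; last by move=> *; exact: Qf_ge0.
  rewrite /Qf; mtac.
rewrite (@integral_affine R (- s) (mu2 + rho * ((y - mu1) / sigma))%R (fun u => (g (Qf y u))%:E) _ sn0) //; last first.
  by move=> x; rewrite lee_fin; apply: g0; exact: Qf_ge0.
rewrite normrN gtr0_norm //; congr (_ * _).
have -> : (fun w => - s * w + (mu2 + rho * ((y - mu1) / sigma)))%R @^-1` `]0%R, +oo[%classic =
    `]-oo, zfun mu1 mu2 sigma rho y[%classic.
  have E : (mu2 / s + rho / s * ((y - mu1) / sigma) = (mu2 + rho * ((y - mu1) / sigma)) / s)%R.
    by field; rewrite !gt_eqF.
  apply/seteqP; split => w /=; rewrite !in_itv /= andbT /zfun E ltr_pdivlMr //.
  - move=> h; nra.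
  - move=> h; nra.
rewrite integral_itv_bndo_bndc; last first.
  apply: measurable_funTS.
  apply: mg_comp => //; last by move=> *; exact: Qf_ge0.
  rewrite /Qf; mtac.
apply: eq_integral => w _; congr (g _)%:E.
rewrite /Qf; congr (_ + _)%R.
have r2 := r2_gt0.
have ss := s_sqr; move: ss s0; set t := Num.sqrt _ => ss s0; by rewrite -ss; field; rewrite !gt_eqF.
Qed.

Lemma mG : measurable_fun setT (fun p : R * R => (g (Qf p.1 p.2))%:E).
Proof. by apply: mg_comp => //; [exact: mQ | move=> *; exact: Qf_ge0]. Qed.

Lemma G_ge0 (p : R * R) : 0 <= (g (Qf p.1 p.2))%:E.
Proof. by rewrite lee_fin; apply: g0; exact: Qf_ge0. Qed.

Lemma mF1 : measurable_fun setT (fun y : R => \int[mu]_(u in `]0%R, +oo[) (g (Qf y u))%:E).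
Proof.
set G := (fun p : R * R => (g (Qf p.1 p.2))%:E).
have mGr : measurable_fun setT (G \_ (setT `*` `]0%R, +oo[%classic)).
  apply/(measurable_restrictT _ _).1; first exact: measurableX.
  exact: measurable_funS mG.
have Gr0 : forall p, 0 <= (G \_ (setT `*` `]0%R, +oo[%classic)) p.
  by move=> p; rewrite patchE; case: ifP => // _; exact: G_ge0.
have := @measurable_fun_fubini_tonelli_F _ _ _ _ R mu _ mGr Gr0.
congr measurable_fun; apply/funext => y; rewrite /fubini_F [RHS]integral_mkcond.
apply: eq_integral => u _; rewrite !patchE in_setX /=.
by rewrite in_setT.
Qed.

Definition Hfun (v : R) : \bar R := \int[mu]_(x in [set: R])
  (g ((x / rho) ^+ 2 + ((v - x) / Num.sqrt (1 - rho ^+ 2)) ^+ 2))%:E.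

Lemma Hfun_ge0 v : 0 <= Hfun v.
Proof.
apply: integral_ge0 => x _; rewrite lee_fin; apply: g0.
by apply: addr_ge0; exact: sqr_ge0.
Qed.

Lemma mH : measurable_fun setT Hfun.
Proof.
have mk : measurable_fun setT (fun p : R * R =>
    (g ((p.1 / rho) ^+ 2 + ((p.2 - p.1) / s) ^+ 2))%:E).
  apply: mg_comp => //; last by move=> *; apply: addr_ge0; exact: sqr_ge0.
  mtac.
have k0 : forall p : R * R, 0 <= (g ((p.1 / rho) ^+ 2 + ((p.2 - p.1) / s) ^+ 2))%:E.
  by move=> p; rewrite lee_fin; apply: g0; apply: addr_ge0; exact: sqr_ge0.
exact: (@measurable_fun_fubini_tonelli_G _ _ _ _ R mu _ mk k0).
Qed.

Lemma inner_den u :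
  \int[mu]_(y in [set: R]) (g (Qf y u))%:E = (sigma / rho)%:E * Hfun (u - mu2).
Proof.
have sr0 : (sigma / rho != 0)%R by rewrite mulf_neq0 ?invr_eq0 ?gt_eqF.
have mh : measurable_fun setT (fun y => (g (Qf y u))%:E).
  by apply: mg_comp => //; [rewrite /Qf; mtac | move=> *; exact: Qf_ge0].
rewrite (@integral_affine R (sigma / rho) mu1 (fun y => (g (Qf y u))%:E) _ sr0) //; last first.
  by move=> x; rewrite lee_fin; apply: g0; exact: Qf_ge0.
rewrite gtr0_norm ?divr_gt0 //; congr (_ * _).
rewrite preimage_setT /Hfun; apply: eq_integral => x _; congr (g _)%:E.
rewrite /Qf.
have s0 := s_gt0.
have ss := s_sqr; move: ss s0; set t := Num.sqrt _ => ss s0.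
by rewrite -ss; field; rewrite !gt_eqF.
Qed.

Lemma outer_den :
  \int[mu]_(u in `]0%R, +oo[) Hfun (u - mu2)%R = \int[mu]_(v in `](- mu2)%R, +oo[) Hfun v.
Proof.
have mh : measurable_fun setT (fun u : R => Hfun (u - mu2)%R).
  apply: measurableT_comp; first exact: mH.
  by mtac.
rewrite (@integral_affine R 1 mu2 (fun u : R => Hfun (u - mu2)%R) _ (oner_neq0 _)) //; last first.
  by move=> x; exact: Hfun_ge0.
rewrite normr1 mul1e.
have -> : (fun w => 1 * w + mu2)%R @^-1` `]0%R, +oo[%classic = `](- mu2)%R, +oo[%classic.
  by apply/seteqP; split => w /=; rewrite !in_itv /= !andbT mul1r -ltrBlDr sub0r.
by apply: eq_integral => v _; rewrite mul1r addrK.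
Qed.
End Main.

Lemma inverE' (R : realType) (r : R) : r != 0 -> ((r%:E)^-1 = (r^-1)%:E)%E.
Proof. by move=> r0; rewrite inver (negbTE r0). Qed.

Theorem corollary3 (R : realType) (g : R -> R)
  (mu1 mu2 sigma rho : R)
  (d : measure_display) (T : measurableType d) (P : probability T R)
  (Y U : T -> R) :
  measurable_fun `[(0:R)%R, +oo[%classic g ->
  (forall u : R, 0 <= u -> 0 <= g u) ->
  (0 < \int[@lebesgue_measure R]_(u in `[(0:R)%R, +oo[%classic) (g u)%:E)%E ->
  (\int[@lebesgue_measure R]_(u in `[(0:R)%R, +oo[%classic) (g u)%:E < +oo)%E ->
  0 < sigma -> 0 < rho -> rho < 1 ->
  measurable_fun setT Y -> measurable_fun setT U ->
  (forall B : set (R * R), measurable B ->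
     P ((fun t => (Y t, U t)) @^-1` B) =
     (\int[(@lebesgue_measure R \x @lebesgue_measure R)%E]_(p in B)
        (biv_sym_pdf g
           (fine (\int[@lebesgue_measure R]_(u in `[(0:R)%R, +oo[%classic) (g u)%:E))
           (mu1, mu2) sigma rho p)%:E)%E) ->
  (0 < P [set t | (0 < U t)%R])%E ->
  forall A : set R, measurable A ->
    (P (Y @^-1` A `&` [set t | (0 < U t)%R]) / P [set t | (0 < U t)%R] =
     \int[@lebesgue_measure R]_(y in A) cond_pdf g mu1 mu2 sigma rho y)%E.
Proof.
move=> mg g0 Kgt0 Kfin sig0 rho0 rho1 mY mU hP P0gt0 A mA.
have K0 : (0 < fine (\int[@lebesgue_measure R]_(u in `[(0:R)%R, +oo[%classic) (g u)%:E))%R.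
  by apply: fine_gt0; rewrite Kgt0 Kfin.
move: hP K0; set K := fine _ => hP K0.
have r2 : (0 < 1 - rho ^+ 2)%R by rewrite subr_gt0 expr2 mulr_ilt1 // ltW.
have s0 : (sigma != 0)%R by rewrite gt_eqF.
have rr1 : (rho ^+ 2 != 1)%R by rewrite eq_sym -subr_eq0 gt_eqF.
set c := ((Num.sqrt (\det (Sigma sigma rho)) * pi * K)^-1)%R.
have c0 : (0 < c)%R.
  rewrite invr_gt0 !mulr_gt0 // ?pi_gt0 // sqrtr_gt0 det_Sigma mulr_gt0 //.
  by rewrite exprn_gt0.
have pdfE : forall p, biv_sym_pdf g K (mu1, mu2) sigma rho p =
    (c * g (Qf mu1 mu2 sigma rho p.1 p.2))%R.
  by case=> y u; rewrite /biv_sym_pdf qform_Sigma.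
have mG' : measurable_fun setT (fun p : R * R => (g (Qf mu1 mu2 sigma rho p.1 p.2))%:E).
  exact: mG.
have G0' : forall p : R * R, (0 <= (g (Qf mu1 mu2 sigma rho p.1 p.2))%:E)%E.
  by move=> p; apply: G_ge0.
have hB : forall B, measurable B -> P ((fun t => (Y t, U t)) @^-1` B) =
    (c%:E * \int[(@lebesgue_measure R \x @lebesgue_measure R)%E]_(p in B)
       (g (Qf mu1 mu2 sigma rho p.1 p.2))%:E)%E.
  move=> B mB; rewrite hP //; under eq_integral do rewrite pdfE EFinM.
  rewrite ge0_integralZl //; first exact: measurable_funS mG'.
  by rewrite lee_fin ltW.
have mP0 : measurable [set t | (0 < U t)%R].
  rewrite (_ : [set t | _] = U @^-1` `]0%R, +oo[%classic); last first.
    by apply/seteqP; split => t /=; rewrite in_itv /= andbT.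
  by rewrite -[X in measurable X]setTI; apply: mU => //; apply: measurable_itv.
have mN : measurable (Y @^-1` A `&` [set t | (0 < U t)%R]).
  apply: measurableI => //.
  by rewrite -[X in measurable X]setTI; exact: mY.
have N1 := probability_le1 P mN.
have P01 := probability_le1 P mP0.
have eN : Y @^-1` A `&` [set t | (0 < U t)%R] =
    (fun t => (Y t, U t)) @^-1` (A `*` `]0%R, +oo[%classic).
  by apply/seteqP; split => t /=; rewrite in_itv /= andbT.
have eP : [set t | (0 < U t)%R] =
    (fun t => (Y t, U t)) @^-1` (setT `*` `]0%R, +oo[%classic).
  apply/seteqP; split => t /=.
    by move=> h; split => //=; rewrite in_itv /= andbT.
  by case=> _ /=; rewrite in_itv /= andbT.
have mI : measurable (`]0%R, +oo[%classic : set R) by exact: measurable_itv.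
have mAI := measurableX mA mI.
have mTI := measurableX (@measurableT _ R) mI.
rewrite eN eP !hB // in N1 P01 P0gt0 *.
rewrite integral_setX1 // integral_setX2 // in N1 P01 P0gt0 *.
have eDen : (\int[@lebesgue_measure R]_(y in `]0%R, +oo[)
       \int[@lebesgue_measure R]_x (g (Qf mu1 mu2 sigma rho (x, y).1 (x, y).2))%:E =
    (sigma / rho)%:E * \int[@lebesgue_measure R]_(v in `](- mu2)%R, +oo[) Hfun g rho v)%E.
  transitivity (\int[@lebesgue_measure R]_(u in `]0%R, +oo[) ((sigma / rho)%:E * Hfun g rho (u - mu2)))%E.
    by apply: eq_integral => u _; exact: (inner_den mu1 mu2 mg g0 sig0 rho0 rho1).
  rewrite ge0_integralZl.
  - by rewrite (outer_den mu2 rho mg g0).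
  - exact: mI.
  - apply: measurable_funTS; apply: measurableT_comp; first exact: mH.
    by mtac.
  - by move=> u _; exact: Hfun_ge0.
  - by rewrite lee_fin divr_ge0 // ltW.
rewrite eDen in P01 P0gt0 *.
set D := (\int[@lebesgue_measure R]_(v in `](- mu2)%R, +oo[) Hfun g rho v)%E in P01 P0gt0 *.
set X := (\int[@lebesgue_measure R]_(x in A) _)%E in N1 *.
have D0 : (0 <= D)%E by apply: integral_ge0 => v _; exact: Hfun_ge0.
have X0 : (0 <= X)%E by apply: integral_ge0 => x _; apply: integral_ge0 => y _.
have eR : (\int[@lebesgue_measure R]_(y in A) cond_pdf g mu1 mu2 sigma rho y =
    ((rho / sigma)%:E * D^-1) * X)%E.
  transitivity (\int[@lebesgue_measure R]_(y in A) (((rho / sigma)%:E * D^-1) *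
     \int[@lebesgue_measure R]_(y0 in `]0%R, +oo[) (g (Qf mu1 mu2 sigma rho (y, y0).1 (y, y0).2))%:E))%E.
    apply: eq_integral => y _.
    rewrite /cond_pdf /= (inner_num mu1 mu2 mg g0 sig0 rho0 rho1 y).
    have -> : (rho * Num.sqrt (1 - rho ^+ 2) / sigma = (rho / sigma) * Num.sqrt (1 - rho ^+ 2))%R.
      by rewrite mulrAC.
    rewrite EFinM -/D -!muleA; congr (_ * _)%E.
    by rewrite [RHS]muleC -muleA.
  rewrite ge0_integralZl //.
  - by apply: measurable_funTS; apply: mF1.
  - by move=> y _; apply: integral_ge0.
  - apply: mule_ge0; last by rewrite inve_ge0.
    by rewrite lee_fin; apply: divr_ge0; apply: ltW.
rewrite eR.
have sr0 : (0 < sigma / rho)%R by rewrite divr_gt0.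
have Dfin : D \is a fin_num.
  rewrite (ge0_fin_numE D0) ltNge leye_eq; apply/negP => /eqP Dinf.
  move: P01; rewrite Dinf [(_ * +oo)%E]muleC gt0_mulye ?lte_fin //.
  by rewrite [(_ * +oo)%E]muleC gt0_mulye ?lte_fin.
have Xfin : X \is a fin_num.
  rewrite (ge0_fin_numE X0) ltNge leye_eq; apply/negP => /eqP Xinf.
  by move: N1; rewrite Xinf [(_ * +oo)%E]muleC gt0_mulye ?lte_fin.
rewrite -(fineK Dfin) -(fineK Xfin) in P0gt0 *.
have dd0 : (0 <= fine D)%R by exact: fine_ge0 D0.
have ddn0 : (fine D != 0)%R.
  apply/negP => /eqP dz; move: P0gt0; rewrite dz mule0 mule0 ltxx.
  done.
rewrite -!EFinM !inverE'.
- rewrite -!EFinM; congr EFin; field.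
  by rewrite ddn0 s0 (gt_eqF rho0) (gt_eqF c0).
- exact: ddn0.
- apply: mulf_neq0; first by rewrite (gt_eqF c0).
  by apply: mulf_neq0; [rewrite (gt_eqF sr0) | exact: ddn0].
Qed.
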